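(* For arbitrary $\bar x,\bar s\in\mathbb{R}^{n+1}_{++}$, the matrix $\nabla\psi(\bar x)+\mathrm{diag}(\bar s/\bar x)$ satisfies $d^\top\big(\nabla\psi(\bar x)+\mathrm{diag}(\bar s/\bar x)\big)d>0$ for all nonzero $d\in\mathbb{R}^{n+1}$; in particular it is nonsingular, so for every right-hand side the linear system with this matrix has a unique solution, and hence the Newton system (N) at any $(\bar x^k,\bar s^k)\in\mathbb{R}^{n+1}_{++}\times\mathbb{R}^{n+1}_{++}$ has a unique solution.
   Context: Let $Q\in\mathbb{R}^{n_z\times n_z}$ be symmetric positive semidefinite, $c\in\mathbb{R}^{n_z}$, $A\in\mathbb{R}^{n_b\times n_z}$, $b\in\mathbb{R}^{n_b}$, and $n=n_z+n_b$. Define $M=\begin{bmatrix}Q&-A^\top\\ A&0\end{bmatrix}$ and $q=\begin{bmatrix}c\\-b\end{bmatrix}$. For $\bar x=(x,\tau)\in\mathbb{R}^{n+1}_{++}$ define $\psi(\bar x)=\begin{bmatrix} Mx+q\tau\\ -x^\top Mx/\tau-x^\top q\end{bmatrix}$ and its Jacobian $\nabla\psi(\bar x)=\begin{bmatrix} M & q\\ -x^\top(M+M^\top)/\tau-q^\top & x^\top Mx/\tau^2\end{bmatrix}$. $\bar s/\bar x$ is componentwise division. Newton system (N): given $\bar x^k,\bar s^k\in\mathbb{R}^{n+1}_{++}$ and $\eta,\gamma\in(0,1)$, let $\bar r^k=\bar s^k-\psi(\bar x^k)$ and $\bar\mu^k=(\bar x^k)^\top\bar s^k/(n+1)$; $(d_{\bar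 x},d_{\bar s})$ solves (N) if $d_{\bar s}-\nabla\psi(\bar x^k)d_{\bar x}=-\eta\bar r^k$ and $\bar x^k\odot d_{\bar s}+\bar s^k\odot d_{\bar x}=\gamma\bar\mu^k e-\bar x^k\odot\bar s^k$ ($\odot$ componentwise product, $e$ all-ones vector). *)

(* Defs.v *)
From HB Require Import structures.
From mathcomp Require Import all_boot all_order all_algebra.
Set Implicit Arguments. Unset Strict Implicit. Unset Printing Implicit Defensive.
Import Order.TTheory GRing.Theory Num.Theory.
Local Open Scope ring_scope.

Section Defs.
Variable R : realFieldType.

Definition Mmat nz nb (Q : 'M[R]_nz) (A : 'M[R]_(nb, nz)) : 'M[R]_(nz + nb) :=
  block_mx Q (- A^T) A 0.

Definition qvec nz nb (c : 'cV[R]_nz) (b : 'cV[R]_nb) : 'cV[R]_(nz + nb) :=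
  col_mx c (- b).

Definition posvec m (v : 'cV[R]_m) : Prop := forall i, 0 < v i 0.

Definition xpart n (xb : 'cV[R]_(n + 1)) : 'cV[R]_n := usubmx xb.
Definition taupart n (xb : 'cV[R]_(n + 1)) : R := dsubmx xb 0 0.

Definition psi n (M : 'M[R]_n) (q : 'cV[R]_n) (xb : 'cV[R]_(n + 1)) : 'cV[R]_(n + 1) :=
  let x := xpart xb in let tau := taupart xb in
  col_mx (M *m x + tau *: q)
         ((- ((x^T *m M *m x) 0 0 / tau) - (x^T *m q) 0 0)%:M).

Definition gradpsi n (M : 'M[R]_n) (q : 'cV[R]_n) (xb : 'cV[R]_(n + 1)) : 'M[R]_(n + 1) :=
  let x := xpart xb in let tau := taupart xb in
  block_mx M q
           (- (tau^-1 *: (x^T *m (M + M^T))) - q^T)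
           (((x^T *m M *m x) 0 0 / tau ^+ 2)%:M).

Definition hadam m (u v : 'cV[R]_m) : 'cV[R]_m := \col_i (u i 0 * v i 0).
Definition cdiv m (u v : 'cV[R]_m) : 'cV[R]_m := \col_i (u i 0 / v i 0).

Definition diagc m (u : 'cV[R]_m) : 'M[R]_m := diag_mx u^T.

Definition newton_sys n (M : 'M[R]_n) (q : 'cV[R]_n) (eta gamma : R)
    (xk sk dx ds : 'cV[R]_(n + 1)) : Prop :=
  let rk := sk - psi M q xk in
  let muk := (xk^T *m sk) 0 0 / (n + 1)%:R in
  ds - gradpsi M q xk *m dx = - (eta *: rk) /\
  hadam xk ds + hadam sk dx = gamma * muk *: const_mx 1 - hadam xk sk.

End Defs.

(* Main.v *)
Require Import Defs.
From HB Require Import structures.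
From mathcomp Require Import all_boot all_order all_algebra.
From mathcomp Require Import ring lra.
Import Order.TTheory GRing.Theory Num.Theory.
Local Open Scope ring_scope.


Lemma tr11 {R : realFieldType} (A : 'M[R]_1) : A^T 0 0 = A 0 0.
Proof. by rewrite mxE. Qed.

Lemma bilT {R : realFieldType} n (a b : 'cV[R]_n) (X : 'M[R]_n) :
  (a^T *m X^T *m b) 0 0 = (b^T *m X *m a) 0 0.
Proof. by rewrite -tr11 !trmx_mul !trmxK mulmxA. Qed.

Lemma bilDl {R : realFieldType} n (a b c : 'cV[R]_n) (X : 'M[R]_n) :
  ((a + b)^T *m X *m c) 0 0 = (a^T *m X *m c) 0 0 + (b^T *m X *m c) 0 0.
Proof. by rewrite linearD /= !mulmxDl mxE. Qed.

Lemma bilDr {R : realFieldType} n (a b c : 'cV[R]_n) (X : 'M[R]_n) :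
  (c^T *m X *m (a + b)) 0 0 = (c^T *m X *m a) 0 0 + (c^T *m X *m b) 0 0.
Proof. by rewrite !mulmxDr mxE. Qed.

Lemma bilNl {R : realFieldType} n (a c : 'cV[R]_n) (X : 'M[R]_n) :
  ((- a)^T *m X *m c) 0 0 = - (a^T *m X *m c) 0 0.
Proof. by rewrite linearN /= !mulNmx mxE. Qed.

Lemma bilNr {R : realFieldType} n (a c : 'cV[R]_n) (X : 'M[R]_n) :
  (c^T *m X *m (- a)) 0 0 = - (c^T *m X *m a) 0 0.
Proof. by rewrite mulmxN mxE. Qed.

Lemma bilZl {R : realFieldType} n k (a c : 'cV[R]_n) (X : 'M[R]_n) :
  ((k *: a)^T *m X *m c) 0 0 = k * (a^T *m X *m c) 0 0.
Proof. by rewrite linearZ /= -!scalemxAl mxE. Qed.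

Lemma bilZr {R : realFieldType} n k (a c : 'cV[R]_n) (X : 'M[R]_n) :
  (c^T *m X *m (k *: a)) 0 0 = k * (c^T *m X *m a) 0 0.
Proof. by rewrite -scalemxAr mxE. Qed.

Lemma addE {R : realFieldType} m n (A B : 'M[R]_(m,n)) i j : (A + B) i j = A i j + B i j.
Proof. by rewrite mxE. Qed.
Lemma oppE {R : realFieldType} m n (A : 'M[R]_(m,n)) i j : (- A) i j = - A i j.
Proof. by rewrite mxE. Qed.
Lemma sclE {R : realFieldType} m n k (A : 'M[R]_(m,n)) i j : (k *: A) i j = k * A i j.
Proof. by rewrite mxE. Qed.
Lemma scmE {R : realFieldType} (k : R) : (k%:M : 'M[R]_1) 0 0 = k.
Proof. by rewrite mxE eqxx mulr1n. Qed.

Lemma qf_grad {R : realFieldType} n (M : 'M[R]_n) (q : 'cV[R]_n) (xb d : 'cV[R]_(n + 1)) :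
  let x := xpart xb in let tau := taupart xb in
  let u := usubmx d in let s := dsubmx d 0 0 in
  (d^T *m gradpsi M q xb *m d) 0 0 =
  ((u - (s / tau) *: x)^T *m M *m (u - (s / tau) *: x)) 0 0.
Proof.
move=> x tau u s.
have hd : d = col_mx u (s%:M) by rewrite -(mx11_scalar (dsubmx d)) vsubmxK.
rewrite [in LHS]hd /gradpsi -/x -/tau tr_col_mx mul_row_block mul_row_col.
rewrite tr_scalar_mx !mul_scalar_mx !mul_mx_scalar.
rewrite !mulmxDl -!scalemxAl mulmxDl mulNmx -scalemxAl mulmxDr mulmxDl.
rewrite !(addE, oppE, sclE, scmE).
rewrite !(bilDl, bilDr, bilNl, bilNr, bilZl, bilZr) bilT.
rewrite -[(u^T *m q) 0 0]tr11 trmx_mul trmxK.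

by rewrite mulNmx oppE -exprVn; ring.
Qed.

Lemma qf_M {R : realFieldType} nz nb (Q : 'M[R]_nz) (A : 'M[R]_(nb, nz)) (w : 'cV[R]_(nz + nb)) :
  (w^T *m Mmat Q A *m w) 0 0 = ((usubmx w)^T *m Q *m usubmx w) 0 0.
Proof.
rewrite -[w in LHS]vsubmxK /Mmat tr_col_mx mul_row_block mul_row_col.
rewrite !mulmx0 addr0 !mulmxDl !addE mulmxN mulNmx oppE.
rewrite -[((dsubmx w)^T *m A *m usubmx w) 0 0]tr11 !trmx_mul !trmxK mulmxA.
by rewrite addrK.
Qed.

Lemma qf_diag {R : realFieldType} m (e d : 'cV[R]_m) :
  (d^T *m diagc e *m d) 0 0 = \sum_i d i 0 ^+ 2 * e i 0.
Proof.
rewrite /diagc mul_mx_diag mxE; apply: eq_bigr => i _.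
by rewrite !mxE; ring.
Qed.
Lemma exnz {R : realFieldType} m (d : 'cV[R]_m) : d != 0 -> exists i, d i 0 != 0.
Proof.
move=> Hd; case: (pickP (fun i => d i 0 != 0)) => [i Hi|H]; first by exists i.
exfalso; move/negP: Hd; apply; apply/eqP/matrixP => i j.
by rewrite ord1 mxE; move: (H i) => /= /negbFE/eqP.
Qed.

Lemma qf_pos {R : realFieldType} n (M : 'M[R]_n) (q : 'cV[R]_n) (xb sb : 'cV[R]_(n + 1)) :
  (forall w : 'cV[R]_n, 0 <= (w^T *m M *m w) 0 0) -> posvec xb -> posvec sb ->
  forall d : 'cV[R]_(n + 1), d != 0 ->
  0 < (d^T *m (gradpsi M q xb + diagc (cdiv sb xb)) *m d) 0 0.
Proof.
move=> HM Hx Hs d Hd.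
rewrite mulmxDr mulmxDl addE qf_grad qf_diag.
have h1 := HM (usubmx d - (dsubmx d 0 0 / taupart xb) *: xpart xb).
have [i Hi] := @exnz _ _ d Hd.
have Hpos : forall j : 'I_(n + 1), 0 <= d j 0 ^+ 2 * cdiv sb xb j 0.
  by move=> j; rewrite mxE; apply: mulr_ge0; [exact: sqr_ge0 | apply/ltW/divr_gt0].
have Hi' : 0 < d i 0 ^+ 2 * cdiv sb xb i 0.
  by rewrite mxE; apply: mulr_gt0; [rewrite exprn_even_gt0 //| apply/divr_gt0].
rewrite (bigD1 i) //=.
have h2 : 0 <= \sum_(j | j != i) d j 0 ^+ 2 * cdiv sb xb j 0 by apply: sumr_ge0.
lra.
Qed.

Lemma posdef_unit {R : realFieldType} m (J : 'M[R]_m) :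
  (forall d : 'cV[R]_m, d != 0 -> 0 < (d^T *m J *m d) 0 0) -> J \in unitmx.
Proof.
move=> H; rewrite unitmxE unitfE; apply/negP => /det0P [v Hv HvJ].
have : v^T != 0 by rewrite trmx_eq0.
by move/H; rewrite trmxK HvJ mul0mx mxE ltxx.
Qed.
Lemma hadamE {R : realFieldType} m (u v : 'cV[R]_m) : hadam u v = diagc u *m v.
Proof. by apply/matrixP => i j; rewrite /diagc mul_diag_mx !mxE ord1. Qed.

Lemma diag_cdiv {R : realFieldType} m (x s : 'cV[R]_m) : posvec x ->
  diagc x *m diagc (cdiv s x) = diagc s.
Proof.
move=> Hx; rewrite /diagc mulmx_diag; congr diag_mx; apply/matrixP => i j.
rewrite !mxE ord1 mulrCA mulfV ?mulr1 //; exact: lt0r_neq0.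
Qed.

Lemma diag_unit {R : realFieldType} m (x : 'cV[R]_m) : posvec x -> diagc x \in unitmx.
Proof.
move=> Hx.
have [] := @mulmx1_unit _ _ (diagc x) (diagc (\col_i (x i 0)^-1)); last by [].
rewrite /diagc mulmx_diag; apply/matrixP => i j; rewrite !mxE.
case: eqP => [->|_]; last by rewrite !mulr0n.
by rewrite !mulr1n mulfV //; apply: lt0r_neq0.
Qed.
Lemma newton_iff {R : realFieldType} n (M : 'M[R]_n) (q : 'cV[R]_n) (eta gamma : R)
    (xk sk dx ds : 'cV[R]_(n + 1)) : posvec xk ->
  let G := gradpsi M q xk in
  let K := diagc xk *m (G + diagc (cdiv sk xk)) in
  let r := sk - psi M q xk in
  let w := gamma * ((xk^T *m sk) 0 0 / (n + 1)%:R) *: const_mx 1 - hadam xk sk in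
  newton_sys M q eta gamma xk sk dx ds <->
  (ds = G *m dx - eta *: r /\ K *m dx = w + eta *: (diagc xk *m r)).
Proof.
move=> Hx G K r w; rewrite /newton_sys -/G -/r -/w !hadamE.
have HK : K *m dx = diagc xk *m (G *m dx) + diagc sk *m dx.
  by rewrite /K mulmxDr mulmxDl -(@diag_cdiv _ _ _ sk Hx) !mulmxA.
rewrite HK; split.
- move=> [/eqP h1 h2].
  have e1 : ds = G *m dx - eta *: r.
    by move: h1; rewrite subr_eq => /eqP ->; rewrite addrC.
  split => //; rewrite -h2 e1 mulmxBr -scalemxAr.
  by rewrite addrAC subrK.
- move=> [e1 h2]; split; first by rewrite e1 addrAC subrr add0r.
  rewrite e1 mulmxBr -scalemxAr addrAC h2.
  by rewrite addrK.
Qed.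

Theorem mainTheorem9 (R : realFieldType) (nz nb : nat)
  (Q : 'M[R]_nz) (c : 'cV[R]_nz) (A : 'M[R]_(nb, nz)) (b : 'cV[R]_nb) :
  Q^T = Q ->
  (forall v : 'cV[R]_nz, 0 <= (v^T *m Q *m v) 0 0) ->
  let M := Mmat Q A in
  let q := qvec c b in
  (forall xb sb : 'cV[R]_(nz + nb + 1), posvec xb -> posvec sb ->
     let J := gradpsi M q xb + diagc (cdiv sb xb) in
     (forall d : 'cV[R]_(nz + nb + 1), d != 0 -> 0 < (d^T *m J *m d) 0 0) /\
     J \in unitmx /\
     (forall rhs : 'cV[R]_(nz + nb + 1), exists! d : 'cV[R]_(nz + nb + 1), J *m d = rhs)) /\
  (forall (xk sk : 'cV[R]_(nz + nb + 1)) (eta gamma : R),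
     posvec xk -> posvec sk -> 0 < eta < 1 -> 0 < gamma < 1 ->
     exists! p : 'cV[R]_(nz + nb + 1) * 'cV[R]_(nz + nb + 1),
       newton_sys M q eta gamma xk sk p.1 p.2).
Proof.
move=> _ HQ M q.
have HM : forall w : 'cV[R]_(nz + nb), 0 <= (w^T *m M *m w) 0 0.
  by move=> w; rewrite /M qf_M; apply: HQ.
have part1 : forall xb sb : 'cV[R]_(nz + nb + 1), posvec xb -> posvec sb ->
     let J := gradpsi M q xb + diagc (cdiv sb xb) in
     (forall d : 'cV[R]_(nz + nb + 1), d != 0 -> 0 < (d^T *m J *m d) 0 0) /\
     J \in unitmx /\
     (forall rhs : 'cV[R]_(nz + nb + 1), exists! d : 'cV[R]_(nz + nb + 1), J *m d = rhs).
  move=> xb sb Hx Hs J.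
  have Hpd := @qf_pos _ _ M q xb sb HM Hx Hs.
  have HJ : J \in unitmx by apply: posdef_unit.
  split => //; split => // rhs.
  exists (invmx J *m rhs); split; first by rewrite mulKVmx.
  by move=> d' <-; rewrite mulKmx.
split => // xk sk eta gamma Hx Hs _ _.
set G := gradpsi M q xk.
set K := diagc xk *m (G + diagc (cdiv sk xk)).
set r := sk - psi M q xk.
set w := gamma * ((xk^T *m sk) 0 0 / (nz + nb + 1)%:R) *: const_mx 1 - hadam xk sk.
have HK : K \in unitmx.
  rewrite unitmx_mul diag_unit //=.
  by have [_ [] ] := part1 xk sk Hx Hs.
set dx := invmx K *m (w + eta *: (diagc xk *m r)).
exists (dx, G *m dx - eta *: r); split.
  by apply/(@newton_iff _ _ M q eta gamma xk sk _ _ Hx); split => //; rewrite /dx mulKVmx.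
move=> [dx' ds'] /= /(@newton_iff _ _ M q eta gamma xk sk dx' ds' Hx) [e1 e2].
have Hd : dx' = dx by rewrite /dx -e2 mulKmx.
by rewrite e1 Hd.
Qed.
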